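(* Let $v$ be a scalar-valued function on an open set $\Omega\subseteq\mathbb{R}^n$ ($n>1$), and let $\phi_1,\phi_2$ be scalar-valued functions on $\Omega$ such that $\underline{g}=\partial_{\underline{x}}\phi_1$ and $\underline{h}=\partial_{\underline{x}}\phi_2$ are two particular vector-valued solutions of the Clifford Riccati equation $\partial_{\underline{x}} f + f^2 = v$. For $K\in\mathbb{C}$ put $\alpha=K\exp(\phi_1-\phi_2)$. Then \[\underline{f}=\frac{\alpha\,\underline{g}-\underline{h}}{\alpha-1}\] is also a (vector-valued) solution of $\partial_{\underline{x}} f + f^2 = v$ (wherever $\alpha\neq 1$).
   Context: $\mathbb{R}_{0,n}$ is the real Clifford algebra generated by an orthonormal basis $e_1,\dots,e_n$ of $\mathbb{R}^n$ with relations $e_je_k+e_ke_j=-2\delta_{jk}$; $\mathbb{C}_n=\mathbb{R}_{0,n}\otimes\mathbb{C}$. The Dirac operator is $\partial_{\underline{x}}=\sum_{j=1}^n e_j\partial_{x_j}$, acting from the left on Clifford-valued functions. *)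

(* Defs.v *)
From HB Require Import structures.
From mathcomp Require Import all_boot all_order all_algebra.
From mathcomp Require Import all_classical all_reals all_analysis.
From mathcomp Require Import complex.
Set Implicit Arguments. Unset Strict Implicit. Unset Printing Implicit Defensive.
Import Order.TTheory GRing.Theory Num.Theory.
Import numFieldNormedType.Exports.
Local Open Scope ring_scope.

Section Clifford.
Variables (R : realType) (n : nat).
Local Notation C := (R[i]).

(* The complex Clifford algebra C_n = R_{0,n} (x) C, represented by its
   coordinates on the basis blades e_A = e_{a1} ... e_{ak}, a1 < ... < ak,
   A ranging over subsets of {0,..,n-1}. *)
Definition cliff := {ffun {set 'I_n} -> C}.

(* e_A e_B = (-1)^(inv(A,B) + #|A /\ B|) e_{A \triangle B}, where inv(A,B) is
   the number of pairs a in A, b in B with b < a (reordering) and each common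
   generator contributes e_j^2 = -1. *)
Definition cl_blade_inv (A B : {set 'I_n}) : nat :=
  #|[set p : ('I_n * 'I_n)%type | (p.1 \in A) && (p.2 \in B) && (p.2 < p.1)%N]|.

Definition cl_blade_sign (A B : {set 'I_n}) : C :=
  (-1) ^+ (cl_blade_inv A B + #|A :&: B|).

Definition cl_symdiff (A B : {set 'I_n}) := (A :\: B) :|: (B :\: A).

Definition cl_mul (a b : cliff) : cliff :=
  [ffun D => \sum_(A : {set 'I_n}) \sum_(B : {set 'I_n} | cl_symdiff A B == D)
               cl_blade_sign A B * a A * b B].

Definition cl_scal (c : C) : cliff := [ffun A => if A == finset.set0 then c else 0].
Definition cl_scale (c : C) (a : cliff) : cliff := [ffun A => c * a A].
Definition cl_gen (j : 'I_n) : cliff := [ffun A => if A == finset.set1 j then 1 else 0].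
Definition cl_is_vector (a : cliff) : Prop := forall A : {set 'I_n}, #|A| != 1%N -> a A = 0.

Definition cl_dirj (j : 'I_n) : 'rV[R]_n := delta_mx 0 j.
Definition cl_cderivable (u : 'rV[R]_n -> C) (x : 'rV[R]_n) (j : 'I_n) : Prop :=
  derivable (fun y => complex.Re (u y)) x (cl_dirj j) /\ derivable (fun y => complex.Im (u y)) x (cl_dirj j).
Definition cl_cpartial (j : 'I_n) (u : 'rV[R]_n -> C) (x : 'rV[R]_n) : C :=
  Complex ('D_(cl_dirj j) (fun y => complex.Re (u y)) x) ('D_(cl_dirj j) (fun y => complex.Im (u y)) x).

Definition cl_derivable (F : 'rV[R]_n -> cliff) (x : 'rV[R]_n) (j : 'I_n) : Prop :=
  forall A : {set 'I_n}, cl_cderivable (fun y => F y A) x j.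
Definition cl_partial (j : 'I_n) (F : 'rV[R]_n -> cliff) (x : 'rV[R]_n) : cliff :=
  [ffun A => cl_cpartial j (fun y => F y A) x].

Definition dirac_op (F : 'rV[R]_n -> cliff) (x : 'rV[R]_n) : cliff :=
  \sum_(j < n) cl_mul (cl_gen j) (cl_partial j F x).

Definition riccati_at (v : 'rV[R]_n -> C) (F : 'rV[R]_n -> cliff) (x : 'rV[R]_n) : Prop :=
  (forall j, cl_derivable F x j) /\ dirac_op F x + cl_mul (F x) (F x) = cl_scal (v x).

End Clifford.

Definition cl_exp (R : realType) (z : R[i]) : R[i] :=
  Complex (expR (complex.Re z) * cos (complex.Im z)) (expR (complex.Re z) * sin (complex.Im z)).

(* Main.v *)
Set Warnings "-all".
Require Import Defs.
From HB Require Import structures.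
From mathcomp Require Import all_boot all_order all_algebra.
From mathcomp Require Import all_classical all_reals all_analysis.
From mathcomp Require Import complex.
From mathcomp Require Import ring lra.
Import Order.TTheory GRing.Theory Num.Theory.
Import numFieldNormedType.Exports.
Local Open Scope ring_scope.
Set Implicit Arguments. Unset Strict Implicit.

Section Chain.
Context {R : realType} {V : normedModType R}.

Lemma derive1P_eq (f : V -> R) x v :
  'D_v f x = 'D_1 (fun h : R => f (h *: v + x)) 0.
Proof.
rewrite /derive; set g1 := fun h => h^-1 *: _; set g2 := fun h => h^-1 *: _.
suff -> : g1 = g2 by [].
by rewrite funeqE /g1 /g2 => h /=; rewrite addr0 scale0r add0r [_%:A]mulr1.
Qed.

Lemma is_derive_comp1 {u : V -> R} {G : R -> R} {x v du dG} :
  is_derive x v u du -> is_derive (u x) 1 G dG ->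
  is_derive x v (fun y => G (u y)) (dG * du).
Proof.
move=> [ud ude] [Gd Gde].
have w1 : is_derive (0:R) 1 (fun h : R => u (h *: v + x)) du.
  split; first exact: (iffLR (derivable1P u x v) ud).
  by rewrite -derive1P_eq.
have G1 : is_derive ((fun h : R => u (h *: v + x)) 0) 1 G dG.
  by rewrite /= scale0r add0r; split.
have := @is_derive1_comp R G (fun h : R => u (h *: v + x)) 0 dG du G1 w1.
case=> d1 d2; split; first exact: (iffRL (derivable1P (fun y => G (u y)) x v) d1).
by rewrite derive1P_eq.
Qed.

Lemma rD {f g : V -> R} {x v df dg} : is_derive x v f df -> is_derive x v g dg ->
  is_derive x v (fun y => f y + g y) (df + dg).
Proof. move=> H1 H2; exact: (is_deriveD H1 H2). Qed.
Lemma rN {f : V -> R} {x v df} : is_derive x v f df ->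
  is_derive x v (fun y => - f y) (- df).
Proof. move=> H1; exact: (is_deriveN H1). Qed.
Lemma rM {f g : V -> R} {x v df dg} : is_derive x v f df -> is_derive x v g dg ->
  is_derive x v (fun y => f y * g y) (f x * dg + g x * df).
Proof. move=> H1 H2; exact: (is_deriveM H1 H2). Qed.
Lemma rInv {f : V -> R} {x v df} : f x != 0 -> is_derive x v f df ->
  is_derive x v (fun y => (f y)^-1) (- (f x)^-2 * df).
Proof.
move=> fx [d e]; split; first exact: derivableV.
by rewrite deriveV // e.
Qed.
Lemma is_derive_ext (f g : V -> R) x v d : (forall y, f y = g y) -> is_derive x v f d -> is_derive x v g d.
Proof. by move=> e; have -> : f = g by apply/funext. Qed.
Lemma rC (k : R) x v : is_derive x v (fun _ : V => k) 0.
Proof. exact: is_derive_cst. Qed.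
End Chain.

Section Cx.
Context {R : realType}.
Implicit Types z w : R[i].
Lemma ReD z w : complex.Re (z + w) = complex.Re z + complex.Re w. Proof. by case: z; case: w. Qed.
Lemma ImD z w : complex.Im (z + w) = complex.Im z + complex.Im w. Proof. by case: z; case: w. Qed.
Lemma ReN z : complex.Re (- z) = - complex.Re z. Proof. by case: z. Qed.
Lemma ImN z : complex.Im (- z) = - complex.Im z. Proof. by case: z. Qed.
Lemma ReM z w : complex.Re (z * w) = complex.Re z * complex.Re w - complex.Im z * complex.Im w.
Proof. by case: z; case: w. Qed.
Lemma ImM z w : complex.Im (z * w) = complex.Re z * complex.Im w + complex.Im z * complex.Re w.
Proof. by case: z => a b; case: w => c d /=; rewrite addrC. Qed.
Lemma ReV z : complex.Re (z^-1) = complex.Re z / (complex.Re z ^+ 2 + complex.Im z ^+ 2).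
Proof. by case: z. Qed.
Lemma ImV z : complex.Im (z^-1) = - (complex.Im z / (complex.Re z ^+ 2 + complex.Im z ^+ 2)).
Proof. by case: z. Qed.
Lemma cplxE z : z = Complex (complex.Re z) (complex.Im z). Proof. by case: z. Qed.
Lemma cplx_eq z w : complex.Re z = complex.Re w -> complex.Im z = complex.Im w -> z = w.
Proof. by case: z; case: w => /= ? ? ? ? -> ->. Qed.
End Cx.

Section CDer.
Context {R : realType} {n : nat}.
Local Notation C := R[i].
Local Notation rV := 'rV[R]_n.
Implicit Types (u w : rV -> C) (c d : C) (x : rV) (j : 'I_n).

Definition cder u x j c :=
  is_derive x (cl_dirj R j) (fun y => complex.Re (u y)) (complex.Re c) /\
  is_derive x (cl_dirj R j) (fun y => complex.Im (u y)) (complex.Im c).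

Lemma cder_is u x j c : cder u x j c -> cl_cderivable u x j /\ cl_cpartial j u x = c.
Proof.
case=> [[d1 e1] [d2 e2]]; split; first by split.
by rewrite /cl_cpartial e1 e2 -cplxE.
Qed.

Lemma cder_of u x j : cl_cderivable u x j -> cder u x j (cl_cpartial j u x).
Proof. by case=> d1 d2; split; apply: derivableP. Qed.

Lemma cder_ext u w x j c : (forall y, u y = w y) -> cder u x j c -> cder w x j c.
Proof. by move=> e; have -> : u = w by apply/funext. Qed.

Lemma cder_cst (k : C) x j : cder (fun _ => k) x j 0.
Proof. by split; apply: rC. Qed.

Lemma cder_add u w x j c d : cder u x j c -> cder w x j d ->
  cder (fun y => u y + w y) x j (c + d).
Proof.
case=> a1 a2 [b1 b2]; split.
  have -> : (fun y => complex.Re (u y + w y)) = (fun y => complex.Re (u y) + complex.Re (w y)).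
    by apply/funext => y; rewrite ReD.
  by rewrite ReD; apply: rD.
have -> : (fun y => complex.Im (u y + w y)) = (fun y => complex.Im (u y) + complex.Im (w y)).
  by apply/funext => y; rewrite ImD.
by rewrite ImD; apply: rD.
Qed.

Lemma cder_opp u x j c : cder u x j c -> cder (fun y => - u y) x j (- c).
Proof.
case=> a1 a2; split.
  have -> : (fun y => complex.Re (- u y)) = (fun y => - complex.Re (u y)).
    by apply/funext => y; rewrite ReN.
  by rewrite ReN; apply: rN.
have -> : (fun y => complex.Im (- u y)) = (fun y => - complex.Im (u y)).
  by apply/funext => y; rewrite ImN.
by rewrite ImN; apply: rN.
Qed.

Lemma cder_sub u w x j c d : cder u x j c -> cder w x j d ->
  cder (fun y => u y - w y) x j (c - d).
Proof. by move=> H1 H2; apply: cder_add => //; apply: cder_opp. Qed.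

Lemma cder_mul u w x j c d : cder u x j c -> cder w x j d ->
  cder (fun y => u y * w y) x j (c * w x + u x * d).
Proof.
case=> a1 a2 [b1 b2]; split.
  have -> : (fun y => complex.Re (u y * w y)) = (fun y => complex.Re (u y) * complex.Re (w y) - complex.Im (u y) * complex.Im (w y)).
    by apply/funext => y; rewrite ReM.
  have H := rD (rM a1 b1) (rN (rM a2 b2)).
  set e := (X in is_derive _ _ _ X) in H.
  suff -> : complex.Re (c * w x + u x * d) = e by [].
  by rewrite /e ReD !ReM; ring.
have -> : (fun y => complex.Im (u y * w y)) = (fun y => complex.Re (u y) * complex.Im (w y) + complex.Im (u y) * complex.Re (w y)).
  by apply/funext => y; rewrite ImM.
have H := rD (rM a1 b2) (rM a2 b1).
set e := (X in is_derive _ _ _ X) in H.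
suff -> : complex.Im (c * w x + u x * d) = e by [].
by rewrite /e ImD !ImM; ring.
Qed.

Lemma cder_inv u x j c : u x != 0 -> cder u x j c ->
  cder (fun y => (u y)^-1) x j (- (c * (u x)^-2)).
Proof.
move=> ux0 [a1 a2].
set N := fun y => complex.Re (u y) * complex.Re (u y) + complex.Im (u y) * complex.Im (u y).
have N0 : N x != 0.
  apply: contra ux0; rewrite /N; move: (u x) => [a b] /=.
  rewrite -!expr2 paddr_eq0 ?sqr_ge0 // !sqrf_eq0 => /andP[/eqP -> /eqP ->]; by [].
have dN := rD (rM a1 a1) (rM a2 a2).
have dV := rInv N0 dN.
split.
  have -> : (fun y => complex.Re ((u y)^-1)) = (fun y => complex.Re (u y) * (N y)^-1).
    by apply/funext => y; rewrite ReV !expr2.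
  have H := rM a1 dV.
  set e := (X in is_derive _ _ _ X) in H.
  suff -> : complex.Re (- (c * (u x)^-2)) = e by [].
  rewrite /e /N; move: N0; rewrite /N => N0.
  rewrite ReN ReM -exprVn expr2 ReM ImM ReV ImV.
  move: N0; move: (complex.Re (u x)) (complex.Im (u x)) (complex.Re c) (complex.Im c) => a b p q N0.
  rewrite !expr2.
  by field.
have H := rN (rM a2 dV).
set e := (X in is_derive _ _ _ X) in H.
suff -> : complex.Im (- (c * (u x)^-2)) = e.
  by apply: is_derive_ext H => y /=; rewrite ImV !expr2.
rewrite /e /N; move: N0; rewrite /N => N0.
rewrite ImN ImM -exprVn expr2 ReM ImM ReV ImV.
move: N0; move: (complex.Re (u x)) (complex.Im (u x)) (complex.Re c) (complex.Im c) => a b p q N0.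
rewrite !expr2.
by field.
Qed.

Lemma cder_exp u x j c : cder u x j c ->
  cder (fun y => cl_exp (u y)) x j (cl_exp (u x) * c).
Proof.
case=> a1 a2.
have E := is_derive_comp1 a1 (is_derive_expR (complex.Re (u x))).
have Co := is_derive_comp1 a2 (is_derive_cos (complex.Im (u x))).
have Si := is_derive_comp1 a2 (is_derive_sin (complex.Im (u x))).
split.
  have H := rM E Co.
  set e := (X in is_derive _ _ _ X) in H.
  suff -> : complex.Re (cl_exp (u x) * c) = e by [].
  by rewrite /e ReM /=; ring.
have H := rM E Si.
set e := (X in is_derive _ _ _ X) in H.
suff -> : complex.Im (cl_exp (u x) * c) = e by [].
by rewrite /e ImM /=; ring.
Qed.

End CDer.

Section Cliff.
Context {R : realType} {n : nat}.
Local Notation C := R[i].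
Local Notation cl := (cliff R n).
Implicit Types (a b c : cl) (k l : C).

Lemma scE k a A : (cl_scale k a) A = k * a A. Proof. by rewrite ffunE. Qed.
Lemma scD k a b : cl_scale k (a + b) = cl_scale k a + cl_scale k b.
Proof. by apply/ffunP => A; rewrite !ffunE mulrDr. Qed.
Lemma scB k a b : cl_scale k (a - b) = cl_scale k a - cl_scale k b.
Proof. by apply/ffunP => A; rewrite !ffunE mulrBr. Qed.
Lemma scA k l a : cl_scale k (cl_scale l a) = cl_scale (k * l) a.
Proof. by apply/ffunP => A; rewrite !ffunE mulrA. Qed.
Lemma sc_sum k (F : 'I_n -> cl) : cl_scale k (\sum_j F j) = \sum_j cl_scale k (F j).
Proof.
apply/ffunP => A; rewrite ffunE !sum_ffunE mulr_sumr.
by apply: eq_bigr => j _; rewrite ffunE.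
Qed.

Lemma mulDl a b c : cl_mul (a + b) c = cl_mul a c + cl_mul b c.
Proof.
apply/ffunP => D; rewrite !ffunE -big_split; apply: eq_bigr => A _.
rewrite -big_split; apply: eq_bigr => B _; by rewrite !ffunE mulrDr mulrDl.
Qed.
Lemma mulDr a b c : cl_mul a (b + c) = cl_mul a b + cl_mul a c.
Proof.
apply/ffunP => D; rewrite !ffunE -big_split; apply: eq_bigr => A _.
rewrite -big_split; apply: eq_bigr => B _; by rewrite !ffunE mulrDr.
Qed.
Lemma mul_scl k a b : cl_mul (cl_scale k a) b = cl_scale k (cl_mul a b).
Proof.
apply/ffunP => D; rewrite !ffunE mulr_sumr; apply: eq_bigr => A _.
rewrite mulr_sumr; apply: eq_bigr => B _; rewrite !ffunE; ring.
Qed.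
Lemma mul_scr k a b : cl_mul a (cl_scale k b) = cl_scale k (cl_mul a b).
Proof.
apply/ffunP => D; rewrite !ffunE mulr_sumr; apply: eq_bigr => A _.
rewrite mulr_sumr; apply: eq_bigr => B _; rewrite !ffunE; ring.
Qed.
Lemma clmul0l b : cl_mul 0 b = 0.
Proof.
apply/ffunP => D; rewrite !ffunE big1 // => A _; rewrite big1 // => B _.
by rewrite ffunE mulr0 mul0r.
Qed.
Lemma clmul0r a : cl_mul a 0 = 0.
Proof.
apply/ffunP => D; rewrite !ffunE big1 // => A _; rewrite big1 // => B _.
by rewrite ffunE mulr0.
Qed.
Lemma negsc a : - a = cl_scale (-1) a.
Proof. by apply/ffunP => A; rewrite !ffunE mulN1r. Qed.
Lemma mulBl a b c : cl_mul (a - b) c = cl_mul a c - cl_mul b c.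
Proof. by rewrite mulDl !negsc mul_scl. Qed.
Lemma mulBr a b c : cl_mul a (b - c) = cl_mul a b - cl_mul a c.
Proof. by rewrite mulDr !negsc mul_scr. Qed.
Lemma mul_suml (F : 'I_n -> cl) b : cl_mul (\sum_j F j) b = \sum_j cl_mul (F j) b.
Proof. by apply: (big_morph (fun a => cl_mul a b)) => [a c|]; [exact: mulDl | exact: clmul0l]. Qed.
Lemma mul_sumr (F : 'I_n -> cl) a : cl_mul a (\sum_j F j) = \sum_j cl_mul a (F j).
Proof. by apply: (big_morph (fun b => cl_mul a b)) => [b c|]; [exact: mulDr | exact: clmul0r]. Qed.

Lemma symd0 (A : {set 'I_n}) : cl_symdiff A finset.set0 = A.
Proof. by rewrite /cl_symdiff finset.setD0 finset.set0D finset.setU0. Qed.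

Lemma mul_scal_r a k : cl_mul a (cl_scal n k) = cl_scale k a.
Proof.
apply/ffunP => D; rewrite !ffunE (bigD1 D) //=.
rewrite [X in _ + X]big1 => [|A AD]; last first.
  rewrite big_mkcond big1 // => B _.
  case: (eqVneq B finset.set0) => [->|B0].
    by rewrite symd0 (negbTE AD).
  by rewrite ffunE (negbTE B0) mulr0; case: ifP.
rewrite addr0 big_mkcond (bigD1 finset.set0) //= [X in _ + X]big1 => [|B B0].
  rewrite ffunE eqxx symd0 eqxx addr0.
  rewrite /cl_blade_sign /cl_blade_inv finset.setI0 cards0 addn0.
  have -> : [set p : 'I_n * 'I_n | (p.1 \in D) && (p.2 \in finset.set0) && (p.2 < p.1)%N] = finset.set0.
    by apply/finset.setP => p; rewrite !inE andbF.
  by rewrite cards0 expr0 mul1r mulrC.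
by rewrite ffunE (negbTE B0) mulr0; case: ifP.
Qed.

End Cliff.

Section Main.
Context {R : realType} {n : nat}.
Local Notation C := R[i].
Local Notation cl := (cliff R n).
Local Notation rV := 'rV[R]_n.

Lemma subE (a b : cl) A : (a - b) A = a A - b A. Proof. by rewrite !ffunE. Qed.
Lemma addE (a b : cl) A : (a + b) A = a A + b A. Proof. by rewrite !ffunE. Qed.
Lemma oppE (a : cl) A : (- a) A = - a A. Proof. by rewrite !ffunE. Qed.
Lemma scalE (k : C) A : (cl_scal n k) A = if A == finset.set0 then k else 0.
Proof. by rewrite ffunE. Qed.

Lemma cder_eqc (u : rV -> C) x j c c' : cder u x j c -> c = c' -> cder u x j c'.
Proof. by move=> H <-. Qed.

Definition cld (F : rV -> cl) x j (P : cl) := forall A, cder (fun y => F y A) x j (P A).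

Lemma cld_is F x j P : cld F x j P -> cl_derivable F x j /\ cl_partial j F x = P.
Proof.
move=> H; split => [A|]; first by case: (cder_is (H A)).
by apply/ffunP => A; rewrite ffunE; case: (cder_is (H A)).
Qed.

Lemma cld_of F x j : cl_derivable F x j -> cld F x j (cl_partial j F x).
Proof. by move=> H A; rewrite ffunE; exact: cder_of (H A). Qed.

Lemma cld_scale (s : rV -> C) F x j s' P : cder s x j s' -> cld F x j P ->
  cld (fun y => cl_scale (s y) (F y)) x j (cl_scale s' (F x) + cl_scale (s x) P).
Proof.
move=> hs hF A; rewrite addE !scE.
apply: (cder_ext (u := fun y => s y * F y A)) => [y|]; first by rewrite scE.
exact: cder_mul hs (hF A).
Qed.

Lemma cld_sub F G x j P Q : cld F x j P -> cld G x j Q ->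
  cld (fun y => F y - G y) x j (P - Q).
Proof.
move=> hF hG A; rewrite subE.
apply: (cder_ext (u := fun y => F y A - G y A)) => [y|]; first by rewrite subE.
exact: cder_sub.
Qed.

Lemma cpartial_ext (u w : rV -> C) x j : (forall y, u y = w y) ->
  cl_cpartial j u x = cl_cpartial j w x.
Proof. by move=> e; have -> : u = w by apply/funext. Qed.

Lemma partial_scal (u : rV -> C) x j :
  cl_partial j (fun y => cl_scal n (u y)) x = cl_scal n (cl_cpartial j u x).
Proof.
apply/ffunP => A; rewrite !ffunE; case: eqP => [->|nA].
  by apply: cpartial_ext => y; rewrite scalE eqxx.
rewrite (@cpartial_ext _ (fun _ => 0)) => [|y]; last by rewrite scalE; case: eqP.
by case: (cder_is (cder_cst 0 x j)).
Qed.

Lemma gform (u : rV -> C) x :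
  dirac_op (fun y => cl_scal n (u y)) x = \sum_j cl_scale (cl_cpartial j u x) (cl_gen R j).
Proof. by apply: eq_bigr => j _; rewrite partial_scal mul_scal_r. Qed.

Lemma sum_mul_sc (c : 'I_n -> C) (F : 'I_n -> cl) b :
  \sum_j cl_scale (c j) (cl_mul (F j) b) = cl_mul (\sum_j cl_scale (c j) (F j)) b.
Proof. by rewrite mul_suml; apply: eq_bigr => j _; rewrite mul_scl. Qed.

Lemma sum_diff (u1 u2 : rV -> C) x (c : 'I_n -> C) k :
  (forall j, c j = k * (cl_cpartial j u1 x - cl_cpartial j u2 x)) ->
  \sum_j cl_scale (c j) (cl_gen R j) =
  cl_scale k (dirac_op (fun y => cl_scal n (u1 y)) x - dirac_op (fun y => cl_scal n (u2 y)) x).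
Proof.
move=> hc; rewrite !gform; apply/ffunP => A.
rewrite scE subE !sum_ffunE mulrBr !mulr_sumr -sumrB; apply: eq_bigr => j _.
by rewrite !scE hc; ring.
Qed.

Lemma sum_diff2 (d1 d2 c : 'I_n -> C) k (G H : cl) :
  \sum_(j < n) cl_scale (d1 j) (cl_gen R j) = G ->
  \sum_(j < n) cl_scale (d2 j) (cl_gen R j) = H ->
  (forall j, c j = k * (d1 j - d2 j)) ->
  \sum_(j < n) cl_scale (c j) (cl_gen R j) = cl_scale k (G - H).
Proof.
move=> <- <- hc; apply/ffunP => A.
rewrite scE subE !sum_ffunE mulrBr !mulr_sumr -sumrB; apply: eq_bigr => j _.
by rewrite !scE hc; ring.
Qed.

Lemma alg (F g h : rV -> cl) x (a s k1 : C) (d1 d2 : 'I_n -> C) (Wx V : cl) :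
  (forall j, cl_partial j F x = cl_scale (k1 * (d1 j - d2 j)) Wx +
     cl_scale s (cl_scale (a * (d1 j - d2 j)) (g x) + cl_scale a (cl_partial j g x) - cl_partial j h x)) ->
  \sum_(j < n) cl_scale (d1 j) (cl_gen R j) = g x ->
  \sum_(j < n) cl_scale (d2 j) (cl_gen R j) = h x ->
  dirac_op g x + cl_mul (g x) (g x) = V ->
  dirac_op h x + cl_mul (h x) (h x) = V ->
  Wx = cl_scale a (g x) - h x -> s * (a - 1) = 1 -> k1 = - (a * s ^+ 2) ->
  dirac_op F x + cl_mul (cl_scale s Wx) (cl_scale s Wx) = V.
Proof.
move=> HF Sg Sh eg eh eW hs hk.
have Ed : dirac_op F x = \sum_(j < n) cl_mul (cl_gen R j) (cl_scale (k1 * (d1 j - d2 j)) Wx +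
     cl_scale s (cl_scale (a * (d1 j - d2 j)) (g x) + cl_scale a (cl_partial j g x) - cl_partial j h x)).
  by apply: eq_bigr => j _; rewrite HF.
rewrite Ed.
under eq_bigr do rewrite mulDr !mul_scr mulBr mulDr !mul_scr scB scD !scA.
rewrite big_split /= big_split /= big_split /= sumrN.
rewrite (sum_mul_sc (fun j => k1 * (d1 j - d2 j)) (fun j => cl_gen R j) Wx).
rewrite (sum_mul_sc (fun j => s * (a * (d1 j - d2 j))) (fun j => cl_gen R j) (g x)).
rewrite (sum_diff2 (k := k1) Sg Sh) // (sum_diff2 (k := s * a) Sg Sh); last by move=> j; rewrite mulrA.
rewrite -(sc_sum _ (fun j => cl_mul (cl_gen R j) (cl_partial j g x))).
rewrite -(sc_sum _ (fun j => cl_mul (cl_gen R j) (cl_partial j h x))).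
have -> : \sum_(j < n) cl_mul (cl_gen R j) (cl_partial j g x) = V - cl_mul (g x) (g x).
  by rewrite -eg addrK.
have -> : \sum_(j < n) cl_mul (cl_gen R j) (cl_partial j h x) = V - cl_mul (h x) (h x).
  by rewrite -eh addrK.
rewrite eW hk.
rewrite !(mulBl, mulBr, mul_scl, mul_scr).
move: (cl_mul (g x) (g x)) (cl_mul (g x) (h x)) (cl_mul (h x) (g x)) (cl_mul (h x) (h x)) => GG GH HG HH.
apply/ffunP => D; rewrite !(addE, subE, oppE, scE).
apply/eqP; rewrite -subr_eq0; apply/eqP.
set L := (X in X = 0).
have -> : L = (s * (a - 1) - 1) * (a * s * HG D - s * HH D + V D) by rewrite /L; ring.
by rewrite hs subrr mul0r.
Qed.
End Main.


Theorem proposition5p2 (R : realType) (n : nat) (hn : (1 < n)%N)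
  (Omega : set 'rV[R]_n) (hOmega : open Omega)
  (v phi1 phi2 : 'rV[R]_n -> R[i]) (K : R[i])
  (hphi1 : forall x, Omega x -> forall j, cl_cderivable phi1 x j)
  (hphi2 : forall x, Omega x -> forall j, cl_cderivable phi2 x j)
  (hg : forall x, Omega x ->
          riccati_at v (dirac_op (fun y => cl_scal n (phi1 y))) x)
  (hh : forall x, Omega x ->
          riccati_at v (dirac_op (fun y => cl_scal n (phi2 y))) x) :
  let g := dirac_op (fun y => cl_scal n (phi1 y)) in
  let h := dirac_op (fun y => cl_scal n (phi2 y)) in
  let alpha := fun y => K * cl_exp (phi1 y - phi2 y) in
  let f := fun y => @cl_scale R n ((alpha y - 1)^-1) (@cl_scale R n (alpha y) (g y) - h y) in
  forall x, Omega x -> alpha x != 1 ->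
    cl_is_vector (f x) /\ riccati_at v f x.
Proof.
move=> g h alpha f x Ox ha1.
have ha1' : alpha x - 1 != 0 by rewrite subr_eq0.
have [dg eg] := hg x Ox.
have [dh eh] := hh x Ox.
pose d1 j := cl_cpartial j phi1 x.
pose d2 j := cl_cpartial j phi2 x.
have D1 j : cder phi1 x j (d1 j) := cder_of (hphi1 x Ox j).
have D2 j : cder phi2 x j (d2 j) := cder_of (hphi2 x Ox j).
have Dal j : cder alpha x j (alpha x * (d1 j - d2 j)).
  have H := cder_mul (cder_cst K x j) (cder_exp (cder_sub (D1 j) (D2 j))).
  by apply: (cder_eqc H); rewrite /alpha /=; ring.
pose k1 := - (alpha x * (alpha x - 1)^-2).
have Ds j : cder (fun y => (alpha y - 1)^-1) x j (k1 * (d1 j - d2 j)).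
  have H := cder_inv ha1' (cder_sub (Dal j) (cder_cst 1 x j)).
  by apply: (cder_eqc H); rewrite /k1; ring.
pose W y := cl_scale (alpha y) (g y) - h y.
pose P j := cl_scale (alpha x * (d1 j - d2 j)) (g x) + cl_scale (alpha x) (cl_partial j g x) - cl_partial j h x.
have DW j : cld W x j (P j).
  exact: cld_sub (cld_scale (Dal j) (cld_of (dg j))) (cld_of (dh j)).
have Df j : cld f x j (cl_scale (k1 * (d1 j - d2 j)) (W x) + cl_scale ((alpha x - 1)^-1) (P j)).
  exact: cld_scale (Ds j) (DW j).
split.
  move=> A hA; rewrite /f scE subE scE /g /h !gform !sum_ffunE.
  have Z c j : (cl_scale c (cl_gen R j)) A = 0.
    rewrite scE ffunE; case: eqP; last by rewrite mulr0.
    by move=> eA; move: hA; rewrite eA cards1.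
  by rewrite !big1 ?mulr0 ?subr0 ?mulr0 // => j _; rewrite Z.
split; first by move=> j; case: (cld_is (Df j)).
have -> : f x = cl_scale ((alpha x - 1)^-1) (W x) by [].
have HF j : cl_partial j f x = cl_scale (k1 * (d1 j - d2 j)) (W x) +
     cl_scale ((alpha x - 1)^-1) (cl_scale (alpha x * (d1 j - d2 j)) (g x) +
       cl_scale (alpha x) (cl_partial j g x) - cl_partial j h x).
  by case: (cld_is (Df j)).
have Sg : \sum_(j < n) cl_scale (d1 j) (cl_gen R j) = g x by rewrite /g gform.
have Sh : \sum_(j < n) cl_scale (d2 j) (cl_gen R j) = h x by rewrite /h gform.
have hs : (alpha x - 1)^-1 * (alpha x - 1) = 1 by rewrite mulVf.
have hk : k1 = - (alpha x * ((alpha x - 1)^-1) ^+ 2) by rewrite /k1 exprVn.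
exact: (alg HF Sg Sh eg eh erefl hs hk).
Qed.
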